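(* Let $G=(V,E)$ be a graph on $n$ vertices $v_1,\dots,v_n$ and let $k$ be a positive integer. Let $v\in V$ be such that its neighbourhood $N(v)$ induces a clique of size at most $k-2$. For any choice of positive parameters $(p_1,\dots,p_n)$, the Glauber dynamics $\mathcal{L}_V$ for $k$-colourings of $G$ and the Glauber dynamics $\mathcal{L}_{V\setminus\{v\}}$ for $k$-colourings of $G-v$ (the subgraph induced by $V\setminus\{v\}$), defined with the same parameters, satisfy $\tau(\mathcal{L}_{V\setminus\{v\}})\leq\tau(\mathcal{L}_V)$.
   Context: The continuous-time Glauber dynamics for proper $k$-vertex-colourings of a graph with parameters $(p_i)$ is the chain on the set of proper colourings with rate $p_i$ from $\sigma$ to $\eta$ whenever $\sigma,\eta$ differ exactly at vertex $v_i$, and rate $0$ otherwise. The relaxation time is $\tau=1/\mathrm{Gap}$, where $\mathrm{Gap}$ is the second smallest eigenvalue of minus the generator. *)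

(* Defs.v *)
From HB Require Import structures.
From mathcomp Require Import all_boot all_order all_algebra.
From mathcomp Require Import reals constructive_ereal.
Set Implicit Arguments. Unset Strict Implicit. Unset Printing Implicit Defensive.
Import Order.TTheory GRing.Theory Num.Theory.
Local Open Scope ring_scope.

(* A graph on vertices 'I_n is a rel e (assumed symmetric, irreflexive).
   For S : {set 'I_n}, the induced subgraph G[S] has vertex type vsub S. *)
Definition vsub (n : nat) (S : {set 'I_n}) := {x : 'I_n | x \in S}.

Definition proper n (e : rel 'I_n) k (S : {set 'I_n}) (c : {ffun vsub S -> 'I_k}) : bool :=
  [forall x : vsub S, forall y : vsub S, e (val x) (val y) ==> (c x != c y)].

Definition colouring n (e : rel 'I_n) k (S : {set 'I_n}) :=
  {c : {ffun vsub S -> 'I_k} | proper e c}.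

Definition glauber_rate (R : realType) n (e : rel 'I_n) k (S : {set 'I_n})
  (p : 'I_n -> R) (s t : colouring e k S) : R :=
  \sum_(x : vsub S | [set y | val s y != val t y] == [set x]) p (val x).

(* minus the generator of the Glauber dynamics for k-colourings of G[S],
   states indexed by 'I_#|colouring e k S| via enum_val *)
Definition minus_gen (R : realType) n (e : rel 'I_n) k (S : {set 'I_n})
  (p : 'I_n -> R) : 'M[R]_#|{: colouring e k S}| :=
  \matrix_(i < #|{: colouring e k S}|, j < #|{: colouring e k S}|)
    if i == j then
      \sum_(t : colouring e k S) @glauber_rate R n e k S p (enum_val i) t
    else - @glauber_rate R n e k S p (enum_val i) (enum_val j).

(* g is the second smallest eigenvalue (counted with multiplicity) of A *)
Definition is_gap (R : realType) m (A : 'M[R]_m) (g : R) : Prop :=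
  exists s : seq R, [/\ sorted <=%R s, (1 < size s)%N,
    char_poly A = \prod_(x <- s) ('X - x%:P) & s`_1 = g].

Definition relax_time (R : realType) (g : R) : \bar R :=
  if 0 < g then (g^-1)%:E else +oo%E.

(* Main.v *)
Require Import Defs.
From HB Require Import structures.
From mathcomp Require Import all_boot all_order all_algebra.
From mathcomp Require Import reals constructive_ereal.
From mathcomp Require Import complex spectral sesquilinear zify ring.
Set Implicit Arguments. Unset Strict Implicit. Unset Printing Implicit Defensive.
Import Order.TTheory GRing.Theory Num.Theory.
Local Open Scope ring_scope.

Module SpM.
Local Open Scope ring_scope.
Local Open Scope sesquilinear_scope.

Section Spec.
Variable C : numClosedFieldType.

Definition qf n (A : 'M[C]_n) (y : 'rV_n) := (y *m A *m y^t*) 0 0.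
Definition nf n (y : 'rV[C]_n) := (y *m y^t*) 0 0.

Lemma nfE n (y : 'rV[C]_n) : nf y = \sum_l y 0 l * (y 0 l)^*.
Proof. by rewrite /nf !mxE; apply: eq_bigr => l _; rewrite !mxE. Qed.

Lemma nf_ge0 n (y : 'rV[C]_n) : 0 <= nf y.
Proof. by rewrite nfE sumr_ge0 // => l _; rewrite mul_conjC_ge0. Qed.

Lemma nf_eq0 n (y : 'rV[C]_n) : nf y = 0 -> y = 0.
Proof.
rewrite nfE => /eqP; rewrite psumr_eq0 => [/allP H|l _]; last exact: mul_conjC_ge0.
apply/rowP => l; rewrite mxE; apply/eqP; rewrite -mul_conjC_eq0.
by apply: H; rewrite mem_index_enum.
Qed.

Definition sel m n (f : 'I_m -> 'I_n) : 'M[C]_(m, n) := \matrix_(a, l) (f a == l)%:R.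

Lemma sel_unitary m n (f : 'I_m -> 'I_n) : injective f -> sel f *m (sel f)^t* = 1%:M.
Proof.
move=> finj; apply/matrixP => a b; rewrite !mxE.
rewrite (bigD1 (f a)) //= big1 => [|l /negPf nl]; last first.
  by rewrite !mxE (eq_sym (f a)) nl mul0r.
by rewrite !mxE eqxx addr0 mul1r conjC_nat (inj_eq finj) eq_sym.
Qed.

Lemma sel_zero m n (f : 'I_m -> 'I_n) (z : 'rV_m) l :
  (forall a, f a != l) -> (z *m sel f) 0 l = 0.
Proof. by move=> H; rewrite !mxE big1 // => a _; rewrite !mxE (negPf (H a)) mulr0. Qed.

Variables (N : nat) (A : 'M[C]_N) (hA : A \is hermsymmx).
Let P := spectralmx A.
Let d := spectral_diag A.

Lemma PPt : P *m P^t* = 1%:M.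
Proof. by apply/unitarymxP; exact: spectral_unitarymx. Qed.

Lemma AE : A = P^t* *m diag_mx d *m P.
Proof.
have /orthomx_spectralP := hermitian_normalmx hA.
by rewrite invmx_unitary ?spectral_unitarymx.
Qed.

Lemma qfE (x : 'rV_N) : qf A (x *m P) = \sum_l d 0 l * (x 0 l * (x 0 l)^*).
Proof.
rewrite /qf AE trmx_mul map_mxM !mulmxA -(mulmxA x P) PPt mulmx1.
rewrite -(mulmxA (x *m diag_mx d) P) PPt mulmx1 !mxE.
apply: eq_bigr => l _; rewrite !mxE (bigD1 l) //= big1 => [|j /negPf nj]; last first.
  by rewrite !mxE nj mulr0n mulr0.
by rewrite !mxE eqxx mulr1n addr0 (mulrC (x 0 l)) -mulrA.
Qed.

Lemma nfE' (x : 'rV_N) : nf (x *m P) = \sum_l x 0 l * (x 0 l)^*.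
Proof.
by rewrite /nf trmx_mul map_mxM mulmxA -(mulmxA x P) PPt mulmx1 -nfE.
Qed.


Lemma char_poly_sim n (Q R : 'M[C]_n) (D : 'M[C]_n) :
  Q *m R = 1%:M -> char_poly (Q *m D *m R) = char_poly D.
Proof.
move=> QR; rewrite /char_poly /char_poly_mx.
have QRp : map_mx polyC Q *m map_mx polyC R = 1%:M.
  by rewrite -map_mxM QR map_scalar_mx.
have -> : 'X%:M - map_mx polyC (Q *m D *m R) =
    map_mx polyC Q *m ('X%:M - map_mx polyC D) *m map_mx polyC R.
  rewrite mulmxBr mulmxBl !map_mxM; congr (_ - _).
  by rewrite scalar_mxC -mulmxA QRp mulmx1.
rewrite !det_mulmx mulrC mulrA -det_mulmx.
suff -> : \det (map_mx polyC R *m map_mx polyC Q) = 1 by rewrite mul1r.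
by rewrite det_mulmx mulrC -det_mulmx QRp det1.
Qed.
Lemma char_polyE : char_poly A = \prod_(l < N) ('X - (d 0 l)%:P).
Proof.
rewrite {1}AE char_poly_sim; last first.
  by rewrite -invmx_unitary ?spectral_unitarymx // mulVmx // spectral_unit.
rewrite char_poly_trig ?diag_mx_is_trig //.
by apply: eq_bigr => l _; rewrite mxE eqxx mulr1n.
Qed.

Lemma card_count (T : finType) (Q : pred T) : #|Q| = count Q (index_enum T).
Proof. by rewrite cardE /enum_mem size_filter. Qed.

Variable s : seq C.
Hypotheses (hs : char_poly A = \prod_(x <- s) ('X - x%:P))
  (s_sorted : sorted <=%R s) (s_size : (1 < size s)%N).

Lemma perm_sd : perm_eq s [seq d 0 l | l <- index_enum 'I_N].
Proof. by apply: prod_XsubC_eq; rewrite -hs char_polyE big_map. Qed.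

Lemma count_sd (Q : pred C) : count Q s = #|[pred l : 'I_N | Q (d 0 l)]|.
Proof. by rewrite card_count (permP perm_sd) count_map. Qed.

Let s1 := s`_1.

Lemma card_lo : (2 <= #|[pred l : 'I_N | (d ord0 l <= s1)%R]|)%N.
Proof.
rewrite -(count_sd (fun x => x <= s1)).
case: s s_sorted s_size @s1 => [|a [|b r]] //= /andP[ab _] _ /=.
by rewrite ab lexx.
Qed.

Lemma card_hi : (N.-1 <= #|[pred l : 'I_N | (s1 <= d ord0 l)%R]|)%N.
Proof.
rewrite -(count_sd (fun x => s1 <= x)).
have : size s = N.+1.-1 by rewrite -(size_char_poly A) hs size_prod_XsubC.
case: s s_sorted s_size @s1 => [|a [|b r]] //= srt _ <- /=.
have /allP H : all (fun x => b <= x) r.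
  by apply: order_path_min => //; [exact: le_trans | case/andP: srt].
have -> : count (fun x => b <= x) r = size r.
  by rewrite -[RHS]count_predT; apply: eq_in_count => x /H.
by rewrite lexx add1n leq_addl.
Qed.


Lemma sel_P_unitary m (f : 'I_m -> 'I_N) : injective f ->
  (sel f *m P) \is unitarymx.
Proof.
move=> finj; apply/unitarymxP.
by rewrite trmx_mul map_mxM mulmxA -(mulmxA _ P) PPt mulmx1 sel_unitary.
Qed.

Lemma CF_upper : exists W : 'M[C]_(2, N),
  row_free W /\ forall c : 'rV_2, qf A (c *m W) <= s1 * nf (c *m W).
Proof.
pose S := [pred l : 'I_N | (d ord0 l <= s1)%R].
pose f (a : 'I_2) : 'I_N := @enum_val _ (mem S) (widen_ord card_lo a).
have finj : injective f.
  by move=> a b /enum_val_inj /(congr1 val) /= /val_inj.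
exists (sel f *m P); split.
  by rewrite /row_free mxrank_unitary ?sel_P_unitary.
move=> c; rewrite mulmxA qfE nfE' mulr_sumr; apply: ler_sum => l _.
case: (pickP (fun a => f a == l)) => [a /eqP fa | nf0].
  apply: ler_wpM2r; first exact: mul_conjC_ge0.
  have := @enum_valP _ (mem S) (widen_ord card_lo a).
  by rewrite -/(f a) fa.
rewrite sel_zero ?mul0r ?mulr0 // => a; exact/negbT/nf0.
Qed.

Lemma CF_lower (W : 'M[C]_(2, N)) : row_free W ->
  exists y : 'rV_N, [/\ y != 0, (y <= W)%MS & s1 * nf y <= qf A y].
Proof.
move=> Wfree.
pose S := [pred l : 'I_N | (s1 <= d ord0 l)%R].
pose g (a : 'I_#|S|) : 'I_N := @enum_val _ (mem S) a.
have ginj : injective g by move=> a b /enum_val_inj.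
pose H := sel g *m P.
have rH : \rank H = #|S| by rewrite mxrank_unitary ?sel_P_unitary.
have Ns : size s = N.
  by apply/eqP; rewrite -eqSS -(size_char_poly A) hs size_prod_XsubC.
have rcap : (0 < \rank (W :&: H))%N.
  have e1 := mxrank_sum_cap W H; rewrite rH (eqP Wfree) in e1.
  have e2 := rank_leq_col (W + H)%MS.
  have e3 : (N.-1 <= #|S|)%N by exact: card_hi.
  have N1 : (1 < N)%N by rewrite -Ns.
  lia.
have [i rowi] : exists i, row i (W :&: H)%MS != 0.
  apply/existsP; apply: contraT; rewrite negb_exists => /forallP H0.
  move: rcap; rewrite lt0n mxrank_eq0 => /eqP []; apply/row_matrixP => j.
  by move: (H0 j); rewrite negbK row0 => /eqP.
have /submx_trans ri := row_sub i (W :&: H)%MS.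
have rW : (row i (W :&: H) <= W)%MS by apply: ri; exact: capmxSl.
have /submxP [z zE] : (row i (W :&: H) <= H)%MS by apply: ri; exact: capmxSr.
exists (row i (W :&: H))%MS; split => //.
rewrite zE /H mulmxA qfE nfE' mulr_sumr; apply: ler_sum => l _.
case: (pickP (fun a => g a == l)) => [a /eqP fa | nf0].
  apply: ler_wpM2r; first exact: mul_conjC_ge0.
  have := @enum_valP _ (mem S) a.
  by rewrite -/(g a) fa.
rewrite sel_zero ?mul0r ?mulr0 // => a; exact/negbT/nf0.
Qed.

End Spec.

Arguments nf {C n}.
Arguments qf {C n}.

Lemma compare_gap (C : numClosedFieldType) Na Nb (A : 'M[C]_Na) (B : 'M[C]_Nb)
  (hA : A \is hermsymmx) (hB : B \is hermsymmx) (sa sb : seq C)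
  (hsa : char_poly A = \prod_(x <- sa) ('X - x%:P)) (sa_sorted : sorted <=%R sa)
  (sa_size : (1 < size sa)%N)
  (hsb : char_poly B = \prod_(x <- sb) ('X - x%:P)) (sb_sorted : sorted <=%R sb)
  (sb_size : (1 < size sb)%N)
  (L : 'M[C]_(Nb, Na)) (m : C) (m_pos : 0 < m)
  (H1 : forall f, nf (f *m L) = m * nf f)
  (H2 : forall f, qf A (f *m L) <= m * qf B f) :
  sa`_1 <= sb`_1.
Proof.
have [W [Wfree Wq]] := CF_upper hB hsb sb_sorted sb_size.
have WLfree : row_free (W *m L).
  rewrite -kermx_eq0; apply/eqP/row_matrixP => i; rewrite row0.
  have : row i (kermx (W *m L)) *m (W *m L) = 0.
    by rewrite -row_mul mulmx_ker row0.
  rewrite mulmxA => /(congr1 nf); rewrite H1 => /eqP.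
  have -> : nf (0 : 'rV[C]_Na) = 0 by rewrite nfE big1 // => l _; rewrite mxE mul0r.
  rewrite mulf_eq0 (gt_eqF m_pos) /= => /eqP /nf_eq0 /eqP.
  by rewrite (mulmx_free_eq0 _ Wfree) => /eqP.
have [y [yn0 /submxP [c yE] yq]] := CF_lower hA hsa sa_sorted sa_size WLfree.
set f := c *m W in Wq.
have fn0 : f != 0.
  apply: contra yn0; rewrite yE mulmxA -/f => /eqP ->; by rewrite mul0mx.
have nfp : 0 < nf f.
  by rewrite lt_def nf_ge0 andbT; apply: contra fn0 => /eqP /nf_eq0 ->.
have yf : y = f *m L by rewrite yE mulmxA.
move: yq; rewrite yf => yq.
have := le_trans yq (le_trans (H2 f) (ler_wpM2l (ltW m_pos) (Wq c))).
rewrite H1 -/f (mulrCA sa`_1) ler_pM2l // ler_pM2r //.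
Qed.

End SpM.
Import SpM.

Module ColM.
Local Open Scope ring_scope.

Section Col.
Variables (n k : nat) (e : rel 'I_n) (v : 'I_n).
Hypotheses (e_sym : symmetric e) (e_irr : irreflexive e).
Local Notation S' := [set~ v].
Local Notation Om := (colouring e k setT).
Local Notation Om' := (colouring e k S').

Definition vT : vsub [set: 'I_n] := exist _ v (in_setT v).
Definition emb (y : vsub S') : vsub [set: 'I_n] := exist _ (val y) (in_setT (val y)).

Definition proj_fun (s : {ffun vsub [set: 'I_n] -> 'I_k}) : {ffun vsub S' -> 'I_k} :=
  [ffun y => s (emb y)].

Lemma proj_proper s : Defs.proper e s -> Defs.proper e (proj_fun s).
Proof.
move=> /forallP H; apply/forallP => x; apply/forallP => y; rewrite !ffunE.
exact: (forallP (H (emb x)) (emb y)).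
Qed.

Definition proj (s : Om) : Om' := exist _ (proj_fun (val s)) (proj_proper (valP s)).


Definition ext (s : {ffun vsub S' -> 'I_k}) (c : 'I_k) : {ffun vsub [set: 'I_n] -> 'I_k} :=
  [ffun y => if (insub (val y) : option (vsub S')) is Some y' then s y' else c].

Lemma ext_vT s c : ext s c vT = c.
Proof. by rewrite ffunE insubN // !inE negbK. Qed.

Lemma ext_emb s c y : ext s c (emb y) = s y.
Proof. by rewrite ffunE /= valK. Qed.

Lemma vsubT_cases (y : vsub [set: 'I_n]) :
  (y = vT) \/ exists y' : vsub S', y = emb y'.
Proof.
case: (eqVneq (val y) v) => [yv | yv]; first by left; apply: val_inj.
right; have yS : val y \in S' by rewrite !inE.
by exists (exist _ (val y) yS); apply: val_inj.
Qed.

Lemma projE (s : {ffun vsub [set: 'I_n] -> 'I_k}) : s = ext (proj_fun s) (s vT).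
Proof.
apply/ffunP => y; case: (vsubT_cases y) => [-> | [y' ->]].
  by rewrite ext_vT.
by rewrite ext_emb ffunE.
Qed.

Lemma proj_ext s c : proj_fun (ext s c) = s.
Proof. by apply/ffunP => y; rewrite ffunE ext_emb. Qed.

Lemma ext_proper s c : Defs.proper e s ->
  (forall u : vsub S', e v (val u) -> s u != c) -> Defs.proper e (ext s c).
Proof.
move=> /forallP sp H; apply/forallP => x; apply/forallP => y; apply/implyP => exy.
case: (vsubT_cases x) => [xv | [x' xv]]; case: (vsubT_cases y) => [yv | [y' yv]].
- by move: exy; rewrite xv yv e_irr.
- by rewrite xv yv ext_vT ext_emb eq_sym H //; move: exy; rewrite xv yv.
- by rewrite xv yv ext_vT ext_emb H //; move: exy; rewrite xv yv e_sym.
- rewrite xv yv !ext_emb; have := forallP (sp x') y'.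
  by move/implyP; apply; move: exy; rewrite xv yv.
Qed.


Hypothesis Nv_clique : forall x y, e v x -> e v y -> x != y -> e x y.

Lemma card_Nv' : #|[set u : vsub S' | e v (val u)]| = #|[set x | e v x]|.
Proof.
rewrite -(card_imset _ val_inj); apply: eq_card => x; rewrite inE.
apply/imsetP/idP => [[u]|exv]; first by rewrite inE => ? ->.
have xS : x \in S' by rewrite !inE; apply: contraTneq exv => ->; rewrite e_irr.
by exists (exist _ x xS); rewrite ?inE.
Qed.

Lemma card_lifts (s' : Om') :
  #|[set s : Om | proj s == s']| = (k - #|[set x | e v x]|)%N.
Proof.
set Lifts := [set s : Om | proj s == s'].
set Nv' := [set u : vsub S' | e v (val u)].
set Cols := [set val s' u | u in Nv'].
pose phi (s : Om) := val s vT.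
have phi_inj : {in Lifts &, injective phi}.
  move=> s1 s2; rewrite !inE => /eqP h1 /eqP h2 hphi; apply: val_inj.
  rewrite (projE (val s1)) (projE (val s2)) -/(phi s1) -/(phi s2) hphi.
  by rewrite -[proj_fun _]/(val (proj s1)) -[proj_fun (val s2)]/(val (proj s2)) h1 h2.
have sp' := valP s'.
have img : phi @: Lifts = ~: Cols.
  apply/setP => c; rewrite inE; apply/imsetP/idP.
    move=> [s]; rewrite inE => /eqP hs ->; apply/imsetP => [[u]]; rewrite inE => evu.
    rewrite -hs /= ffunE /phi => /eqP; apply/negP.
    by have := forallP (forallP (valP s) vT) (emb u); rewrite /= evu eq_sym.
  move=> hc.
  have ep : Defs.proper e (ext (val s') c).
    apply: ext_proper => // u evu; apply: contra hc => /eqP <-.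
    by apply/imsetP; exists u; rewrite ?inE.
  exists (exist _ (ext (val s') c) ep); last by rewrite /phi /= ext_vT.
  by rewrite inE; apply/eqP/val_inj; rewrite /= proj_ext.
rewrite -(card_in_imset phi_inj) img cardsCs setCK card_ord.
rewrite card_in_imset ?card_Nv' //.
move=> u1 u2; rewrite !inE => h1 h2 heq; apply/eqP; apply: contraT => hne.
have ne : val u1 != val u2 by [].
have := forallP (forallP sp' u1) u2.
by rewrite Nv_clique //= heq eqxx.
Qed.


Variables (R : realType) (p : 'I_n -> R).
Hypothesis p_pos : forall i, 0 < p i.

Definition dset S (s t : colouring e k S) := [set y | val s y != val t y].

Lemma rate_cases S (s t : colouring e k S) :
  (glauber_rate p s t = 0) \/
  exists x, dset s t = [set x] /\ glauber_rate p s t = p (val x).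
Proof.
rewrite /glauber_rate -/(dset s t).
case: (pickP (fun x => dset s t == [set x])) => [x0 hx0 | none].
  right; exists x0; split; first exact/eqP.
  rewrite (bigD1 x0) //= big1 ?addr0 // => x /andP[hx nx].
  by move: hx; rewrite (eqP hx0) => /eqP /set1_inj hx; rewrite hx eqxx in nx.
by left; rewrite big_pred0.
Qed.

Lemma rate_ge0 S (s t : colouring e k S) : 0 <= glauber_rate p s t.
Proof. by rewrite sumr_ge0 // => x _; exact: ltW. Qed.

Lemma rate_self S (s : colouring e k S) : glauber_rate p s s = 0.
Proof.
rewrite /glauber_rate big_pred0 // => x.
apply/negbTE; apply/eqP => /setP /(_ x); by rewrite !inE !eqxx.
Qed.

Lemma rate_sym S (s t : colouring e k S) : glauber_rate p s t = glauber_rate p t s.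
Proof.
rewrite /glauber_rate; apply: eq_bigl => x.
by congr (_ == _); apply/setP => y; rewrite !inE eq_sym.
Qed.

Lemma agree_proj (s t : Om) : dset s t \subset [set vT] -> proj s = proj t.
Proof.
move=> /subsetP H; apply: val_inj; apply/ffunP => y; rewrite /= !ffunE.
apply/eqP; apply: contraT => hne.
have /H /set1P /(congr1 val) /= yv : emb y \in dset s t by rewrite inE.
by move: (valP y); rewrite !inE => /eqP []; exact: yv.
Qed.

Lemma agree_vT (s t : Om) x : dset s t = [set x] -> x != vT -> val s vT = val t vT.
Proof.
move=> hD xv; apply/eqP; apply: contraT => hne.
have : vT \in dset s t by rewrite inE.
by rewrite hD => /set1P hx; move: xv; rewrite hx eqxx.
Qed.

Lemma lift_unique (s t : Om) : proj s = proj t -> val s vT = val t vT -> s = t.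
Proof.
move=> hp hv; apply: val_inj; rewrite (projE (val s)) (projE (val t)) hv.
by rewrite -[proj_fun (val s)]/(val (proj s)) hp.
Qed.

Lemma rate_nz_vT (s t : Om) x : dset s t = [set x] -> proj s != proj t -> x != vT.
Proof.
move=> hD; apply: contra => /eqP xv; apply/eqP/agree_proj.
by rewrite hD xv subxx.
Qed.

Lemma rate_lift (s : Om) (t' : Om') : proj s != t' ->
  \sum_(t : Om | proj t == t') glauber_rate p s t <= glauber_rate p (proj s) t'.
Proof.
move=> hst.
case: (pickP (fun t : Om => (proj t == t') && (glauber_rate p s t != 0)))
  => [t0 /andP[/eqP pt0 r0] | none]; last first.
  rewrite big1 ?rate_ge0 // => t pt; apply/eqP; move: (none t); rewrite pt /=.
  by move/negbT; rewrite negbK.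
have [r00|[x [hD hr]]] := rate_cases s t0; first by rewrite r00 eqxx in r0.
have xv : x != vT by apply: (rate_nz_vT hD); rewrite pt0.
rewrite (bigD1 t0) ?pt0 //= big1 ?addr0; last first.
  move=> t /andP[/eqP pt nt]; have [//|[x2 [hD2 _]]] := rate_cases s t.
  have x2v : x2 != vT by apply: (rate_nz_vT hD2); rewrite pt.
  case/negP: nt; apply/eqP; apply: lift_unique; first by rewrite pt pt0.
  by rewrite -(agree_vT hD2 x2v) (agree_vT hD xv).
have xS : val x \in S' by rewrite !inE; apply: contra xv => /eqP xv; apply/eqP/val_inj.
pose x' : vsub S' := exist _ (val x) xS.
have hD' : dset (proj s) t' = [set x'].
  apply/setP => z; rewrite -pt0 !inE /= !ffunE.
  move/setP: (hD) => /(_ (emb z)); rewrite !inE => ->.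
  apply/eqP/eqP => [h | ->]; apply: val_inj => /=; last by []. by rewrite -h.
rewrite hr /glauber_rate -/(dset _ _) (bigD1 x') /=; last by rewrite hD'.
by rewrite lerDl sumr_ge0 // => z _; exact: ltW.
Qed.

End Col.

End ColM.
Import ColM.

Module LapM.
Local Open Scope ring_scope.
Local Open Scope sesquilinear_scope.

Section Lap.
Variable R : realType.
Local Notation C := (R[i]).
Local Notation "x %:C" := (real_complex R x).

Lemma sum_rank (T : finType) (F : 'I_#|T| -> C) :
  \sum_i F i = \sum_(x : T) F (enum_rank x).
Proof.
rewrite (reindex (@enum_rank T)) //; exists enum_val => x _.
  by rewrite enum_rankK. by rewrite enum_valK.
Qed.

Definition Lap (T : finType) (r : T -> T -> R) : 'M[R]_#|T| :=
  \matrix_(i, j) if i == j then \sum_t r (enum_val i) t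
                 else - r (enum_val i) (enum_val j).

Definition nsq (z : C) := z * z^*.

Lemma qf_sum n (M : 'M[C]_n) (g : 'rV_n) :
  qf M g = \sum_i \sum_j M i j * (g 0 i * (g 0 j)^*).
Proof.
rewrite /qf mxE; under eq_bigr do rewrite !mxE mulr_suml.
rewrite exchange_big /=; apply: eq_bigr => i _; apply: eq_bigr => j _.
ring.
Qed.

Variables (T : finType) (r : T -> T -> R).
Hypotheses (rsym : forall x y, r x y = r y x) (r0 : forall x, r x x = 0).

Lemma lap_qf (g : 'rV[C]_#|T|) (G := fun x => g 0 (enum_rank x)) :
  2%:R * qf (map_mx (real_complex R) (Lap r)) g =
  \sum_x \sum_y (r x y)%:C * nsq (G x - G y).
Proof.
pose D x := \sum_t (r x t)%:C.
have Mxy : forall x y, map_mx (real_complex R) (Lap r) (enum_rank x) (enum_rank y)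
    = (x == y)%:R * D x - (r x y)%:C.
  move=> x y; rewrite !mxE !enum_rankK (inj_eq enum_rank_inj).
  case: eqP => [<-|_]; first by rewrite r0 rmorph0 subr0 mul1r rmorph_sum.
  by rewrite mul0r sub0r rmorphN.
have E1 : qf (map_mx (real_complex R) (Lap r)) g =
    \sum_x D x * nsq (G x) - \sum_x \sum_y (r x y)%:C * (G x * (G y)^*).
  rewrite qf_sum sum_rank -sumrB; apply: eq_bigr => x _.
  rewrite sum_rank; under eq_bigr do rewrite Mxy mulrBl.
  rewrite sumrB; congr (_ - _).
  rewrite (bigD1 x) //= eqxx mul1r big1 ?addr0 // => y; rewrite eq_sym => /negPf ->.
  by rewrite mul0r mul0r.
have E2 : \sum_x \sum_y (r x y)%:C * (G y * (G x)^*) =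
    \sum_x \sum_y (r x y)%:C * (G x * (G y)^*).
  by rewrite exchange_big; apply: eq_bigr => x _; apply: eq_bigr => y _; rewrite rsym.
have E3 : \sum_x \sum_y (r x y)%:C * nsq (G y) = \sum_x D x * nsq (G x).
  rewrite exchange_big; apply: eq_bigr => x _; rewrite /D mulr_suml.
  by apply: eq_bigr => y _; rewrite rsym.
have E4 : \sum_x \sum_y (r x y)%:C * nsq (G x) = \sum_x D x * nsq (G x).
  by apply: eq_bigr => x _; rewrite /D mulr_suml.
transitivity (\sum_x \sum_y ((r x y)%:C * nsq (G x) + (r x y)%:C * nsq (G y)
   - ((r x y)%:C * (G x * (G y)^*) + (r x y)%:C * (G y * (G x)^*)))).
  rewrite E1.
  under [RHS]eq_bigr do rewrite sumrB !big_split /=.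
  rewrite sumrB !big_split /= E2 E3 E4 mulrBr; congr (_ - _); by rewrite mulr2n mulrDl mul1r.
apply: eq_bigr => x _; apply: eq_bigr => y _.
by rewrite /nsq rmorphB /=; ring.
Qed.


Lemma nsq_ge0 z : 0 <= nsq z.
Proof. exact: mul_conjC_ge0. Qed.

End Lap.

Section Lift.
Variable R : realType.
Local Notation C := (R[i]).
Local Notation "x %:C" := (real_complex R x).
Variables (T T' : finType) (pi : T -> T') (r : T -> T -> R) (r' : T' -> T' -> R) (m : nat).
Hypotheses (card_l : forall t', #|[pred t | pi t == t']| = m)
  (r_ge0 : forall x y, 0 <= r x y)
  (r_lift : forall s t', pi s != t' ->
     \sum_(t | pi t == t') r s t <= r' (pi s) t').

Definition Lm : 'M[C]_(#|T'|, #|T|) := \matrix_(i, j) (pi (enum_val j) == enum_val i)%:R.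

Lemma Lm_apply (f : 'rV[C]_#|T'|) x : (f *m Lm) 0 (enum_rank x) = f 0 (enum_rank (pi x)).
Proof.
rewrite !mxE (bigD1 (enum_rank (pi x))) //= big1 ?addr0.
  by rewrite !mxE !enum_rankK eqxx mulr1.
move=> i ni; rewrite !mxE enum_rankK; case: eqP => [h|_]; last by rewrite mulr0.
by case/eqP: ni; rewrite h enum_valK.
Qed.

Lemma sum_lift (F : T' -> C) : \sum_x F (pi x) = m%:R * \sum_y F y.
Proof.
rewrite (partition_big pi predT) //= mulr_sumr; apply: eq_bigr => y _.
rewrite (eq_bigr (fun _ => F y)); last by move=> x /eqP ->.
by rewrite sumr_const -(card_l y) mulr_natl.
Qed.

Lemma nf_lift (f : 'rV[C]_#|T'|) : nf (f *m Lm) = m%:R * nf f.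
Proof.
rewrite !nfE sum_rank (sum_rank (fun i => f 0 i * (f 0 i)^*)).
under eq_bigr do rewrite Lm_apply.
by rewrite (sum_lift (fun y => f 0 (enum_rank y) * (f 0 (enum_rank y))^*)).
Qed.

Lemma quad_lift (F : T' -> C) :
  \sum_x \sum_y (r x y)%:C * nsq (F (pi x) - F (pi y)) <=
  m%:R * \sum_x' \sum_y' (r' x' y')%:C * nsq (F x' - F y').
Proof.
pose H x' := \sum_y' (r' x' y')%:C * nsq (F x' - F y').
rewrite -(sum_lift H) ler_sum // => x _.
rewrite (partition_big pi predT) //= /H ler_sum // => y' _.
rewrite (eq_bigr (fun y => nsq (F (pi x) - F y') * (r x y)%:C)); last first.
  by move=> y /eqP ->; rewrite mulrC.
rewrite -mulr_sumr mulrC -rmorph_sum.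
case: (eqVneq (pi x) y') => [->|ne]; first by rewrite subrr /nsq mul0r !mulr0.
by apply: ler_wpM2r; [exact: nsq_ge0 | rewrite lecR; exact: r_lift].
Qed.

End Lift.

End LapM.
Import LapM.
Local Open Scope ring_scope.

Lemma real_C (R : realType) (x : R) : real_complex R x \is Num.real.
Proof.
rewrite realE -(rmorph0 (real_complex R)) !lecR; exact: le_total.
Qed.

Lemma lap_herm (R : realType) (T : finType) (r : T -> T -> R)
  (rsym : forall x y, r x y = r y x) :
  map_mx (real_complex R) (Lap r) \is hermsymmx.
Proof.
apply: realsym_hermsym.
  apply/is_hermitianmxP; rewrite expr0 scale1r; apply/matrixP => i j.
  rewrite !mxE [j == i]eq_sym; case: eqP => [->|_] //.
  by rewrite rsym.
by apply/mxOverP => i j; rewrite mxE real_C.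
Qed.

Theorem proposition9 (R : realType) (n k : nat) (e : rel 'I_n)
  (e_sym : symmetric e) (e_irr : irreflexive e) (v : 'I_n)
  (p : 'I_n -> R) (p_pos : forall i, 0 < p i) (k_pos : (0 < k)%N)
  (Nv_clique : forall x y, e v x -> e v y -> x != y -> e x y)
  (Nv_size : (#|[set x | e v x]| + 2 <= k)%N)
  (gV gVv : R) :
  is_gap (minus_gen e k setT p) gV ->
  is_gap (minus_gen e k [set~ v] p) gVv ->
  (relax_time gVv <= relax_time gV)%E.
Proof.
move=> [sA [sAs sAz hA gA]] [sB [sBs sBz hB gB]].
pose phi := real_complex R.
have EA : minus_gen e k setT p = Lap (glauber_rate p) by [].
have EB : minus_gen e k [set~ v] p = Lap (glauber_rate p) by [].
pose m := (k - #|[set x | e v x]|)%N.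
have card_l : forall t' : colouring e k [set~ v], #|[pred t : colouring e k setT | proj v t == t']| = m.
  move=> t'; rewrite /m -(card_lifts e_sym e_irr Nv_clique t').
  by apply: eq_card => x; rewrite inE.
have mpos : (0 : R[i]) < m%:R by rewrite ltr0n /m; lia.
have le12 : phi (sA`_1) <= phi (sB`_1).
  rewrite -!(nth_map 0 0 phi) //.
  apply: (@compare_gap _ _ _ (map_mx phi (minus_gen e k setT p))
                        (map_mx phi (minus_gen e k [set~ v] p)) _ _ _ _ _ _ _ _ _ _
                        (Lm R (proj v)) (m%:R)).
  - by rewrite EA; apply: lap_herm; exact: rate_sym.
  - by rewrite EB; apply: lap_herm; exact: rate_sym.
  - by rewrite prod_map_poly -hA map_char_poly.
  - by apply: homo_sorted sAs => x y; rewrite lecR.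
  - by rewrite size_map.
  - by rewrite prod_map_poly -hB map_char_poly.
  - by apply: homo_sorted sBs => x y; rewrite lecR.
  - by rewrite size_map.
  - exact: mpos.
  - by move=> f; apply: nf_lift.
  move=> f.
  rewrite -(ler_pM2l (ltr0Sn _ 1)) mulrCA.
  rewrite EA EB !lap_qf; try exact: rate_sym; try exact: rate_self.
  under eq_bigr do under eq_bigr do rewrite !Lm_apply.
  exact: (quad_lift card_l (fun s t' h => rate_lift p_pos h)).
have le12' : gV <= gVv by rewrite -gA -gB -lecR.
rewrite /relax_time; case: ifPn => h1; case: ifPn => h2; rewrite ?leey //.
  rewrite lee_fin lef_pV2 ?posrE //.
by case/negP: h1; apply: lt_le_trans le12'.
Qed.
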